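(* For a solution as in the setting on $S^1\times(R_s,R_i]$ with $0<R_s<R_i$, define $\tilde{\mathcal{E}}(R)=\mathcal{E}(R)+\int_{S^1}\frac{e^{2\beta}K^2}{4\sqrt\alpha\,R^4}\,d\theta$. Then $$\frac{d\tilde{\mathcal{E}}}{dR}=-\int_{S^1}\left(\frac{e^{2\beta}K^2}{\sqrt\alpha\,R^5}+\frac{2U_R^2}{\sqrt\alpha\,R}+\frac{\sqrt\alpha\,e^{4U}A_\theta^2}{2R^3}\right)d\theta\le 0,$$ and for every $R_k\in(R_s,R_i]$, $\tilde{\mathcal{E}}(R_k)\le\tilde{\mathcal{E}}(R_i)\,(R_i/R_k)^4$.
   Context: Setting. A smooth vacuum $T^2$ symmetric spacetime in areal coordinates $(\theta,x,y,R)$, $\theta\in S^1=\mathbb{R}/\mathbb{Z}$, with metric $g=e^{2(\nu-U)}(-\alpha\,dR^2+d\theta^2)+e^{2U}[dx+A\,dy+(G+AH)\,d\theta]^2+e^{-2U}R^2(dy+H\,d\theta)^2$, where $\alpha>0,\nu,U,A,G,H$ are smooth functions of $(\theta,R)$ only, periodic in $\theta$; $K\ge0$ is the constant twist, the other twist vanishing; $\beta=\nu+\tfrac12\ln\alpha$. The vacuum equations are: $\beta_R=\sqrt{\alpha}Rh-\frac{e^{2\beta}K^2}{4R^3}$, $\beta_\theta=2R\big(U_RU_\theta+\frac{e^{4U}}{4R^2}A_RA_\theta\big)$, $\alpha_R=-\frac{\alpha e^{2\beta}K^2}{R^3}$, $U_{RR}-\alpha U_{\theta\theta}=-\frac{U_R}{R}+\frac{\alpha_RU_R}{2\alpha}+\frac{\alpha_\theta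 U_\theta}{2}+\frac{e^{4U}}{2R^2}(A_R^2-\alpha A_\theta^2)$, $A_{RR}-\alpha A_{\theta\theta}=\frac{A_R}{R}+\frac{\alpha_RA_R}{2\alpha}+\frac{\alpha_\theta A_\theta}{2}-4A_RU_R+4\alpha A_\theta U_\theta$, $G_R=-AH_R$, $H_R=\frac{e^{2\beta}K}{\sqrt{\alpha}R^3}$, with $h=\frac{U_R^2}{\sqrt\alpha}+\sqrt\alpha\,U_\theta^2+\frac{e^{4U}}{4R^2}\Big(\frac{A_R^2}{\sqrt\alpha}+\sqrt\alpha\,A_\theta^2\Big)$ and $\mathcal{E}(R)=\int_{S^1}h\,d\theta$. *)

(* Defs.v *)
From Stdlib Require Import Reals List.
From Coquelicot Require Import Coquelicot.
Open Scope R_scope.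

(* Functions of (theta, R) are represented as  f : R -> R -> R,  f theta r. *)

Definition dR (f : R -> R -> R) : R -> R -> R :=
  fun t r => Derive (fun r' => f t r') r.
Definition dT (f : R -> R -> R) : R -> R -> R :=
  fun t r => Derive (fun t' => f t' r) t.

Fixpoint pd (ds : list bool) (f : R -> R -> R) : R -> R -> R :=
  match ds with
  | nil => f
  | d :: ds' => if d then dR (pd ds' f) else dT (pd ds' f)
  end.

Definition smooth_on (D : R -> R -> Prop) (f : R -> R -> R) : Prop :=
  forall (ds : list bool) (t r : R), D t r ->
    ex_derive (fun r' => pd ds f t r') r /\
    ex_derive (fun t' => pd ds f t' r) t /\
    continuous (fun p : R * R => pd ds f (fst p) (snd p)) (t, r).

(* periodic in theta, theta in S^1 = R/Z *)
Definition periodic1 (f : R -> R -> R) : Prop :=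
  forall t r, f (t + 1) r = f t r.

Definition beta (nu alpha : R -> R -> R) : R -> R -> R :=
  fun t r => nu t r + / 2 * ln (alpha t r).

Definition hdens (alpha U A : R -> R -> R) (t r : R) : R :=
  (dR U t r) ^ 2 / sqrt (alpha t r) + sqrt (alpha t r) * (dT U t r) ^ 2
  + exp (4 * U t r) / (4 * r ^ 2) *
    ((dR A t r) ^ 2 / sqrt (alpha t r) + sqrt (alpha t r) * (dT A t r) ^ 2).

Definition Energy (alpha U A : R -> R -> R) (r : R) : R :=
  RInt (fun t => hdens alpha U A t r) 0 1.

Definition Etilde (alpha nu U A : R -> R -> R) (K r : R) : R :=
  Energy alpha U A r
  + RInt (fun t => exp (2 * beta nu alpha t r) * K ^ 2
                   / (4 * sqrt (alpha t r) * r ^ 4)) 0 1.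

(* the vacuum T^2-symmetric Einstein equations in areal coordinates, at (t,r) *)
Definition vacuum_eqs (alpha nu U A G H : R -> R -> R) (K t r : R) : Prop :=
  let b := beta nu alpha in
  dR b t r = sqrt (alpha t r) * r * hdens alpha U A t r
             - exp (2 * b t r) * K ^ 2 / (4 * r ^ 3) /\
  dT b t r = 2 * r * (dR U t r * dT U t r
             + exp (4 * U t r) / (4 * r ^ 2) * dR A t r * dT A t r) /\
  dR alpha t r = - (alpha t r * exp (2 * b t r) * K ^ 2 / r ^ 3) /\
  dR (dR U) t r - alpha t r * dT (dT U) t r =
    - (dR U t r / r) + dR alpha t r * dR U t r / (2 * alpha t r)
    + dT alpha t r * dT U t r / 2
    + exp (4 * U t r) / (2 * r ^ 2) * ((dR A t r) ^ 2 - alpha t r * (dT A t r) ^ 2) /\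
  dR (dR A) t r - alpha t r * dT (dT A) t r =
    dR A t r / r + dR alpha t r * dR A t r / (2 * alpha t r)
    + dT alpha t r * dT A t r / 2
    - 4 * dR A t r * dR U t r + 4 * alpha t r * dT A t r * dT U t r /\
  dR G t r = - (A t r * dR H t r) /\
  dR H t r = exp (2 * b t r) * K / (sqrt (alpha t r) * r ^ 3).

(* Main.v *)
Require Import Defs.
From Stdlib Require Import Reals Lra List Classical ClassicalEpsilon.
From Coquelicot Require Import Coquelicot.
Open Scope R_scope.
Set Bullet Behavior "Strict Subproofs".

Definition C2 (g : R -> R -> R) (t r : R) : Prop :=
  continuous (fun p : R * R => g (fst p) (snd p)) (t, r).

Lemma C2_plus g1 g2 t r : C2 g1 t r -> C2 g2 t r -> C2 (fun t r => g1 t r + g2 t r) t r.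
Proof. intros H1 H2. apply (continuous_plus (fun p : R*R => g1 (fst p) (snd p)) (fun p : R*R => g2 (fst p) (snd p))); assumption. Qed.
Lemma C2_mult g1 g2 t r : C2 g1 t r -> C2 g2 t r -> C2 (fun t r => g1 t r * g2 t r) t r.
Proof. intros H1 H2. apply (continuous_mult (fun p : R*R => g1 (fst p) (snd p)) (fun p : R*R => g2 (fst p) (snd p))); assumption. Qed.
Lemma C2_opp g1 t r : C2 g1 t r -> C2 (fun t r => - g1 t r) t r.
Proof. intros H1. apply (continuous_opp (fun p : R*R => g1 (fst p) (snd p))); assumption. Qed.
Lemma C2_minus g1 g2 t r : C2 g1 t r -> C2 g2 t r -> C2 (fun t r => g1 t r - g2 t r) t r.
Proof. intros H1 H2. apply (C2_plus g1 (fun t r => - g2 t r)); [|apply C2_opp]; assumption. Qed.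
Lemma C2_const c t r : C2 (fun _ _ => c) t r.
Proof. apply continuous_const. Qed.
Lemma C2_snd t r : C2 (fun _ r => r) t r.
Proof. apply continuous_snd. Qed.
Lemma C2_comp (f : R -> R) g t r : C2 g t r -> continuous f (g t r) -> C2 (fun t r => f (g t r)) t r.
Proof. intros H1 H2. apply (continuous_comp (fun p : R*R => g (fst p) (snd p)) f); assumption. Qed.
Lemma C2_exp g t r : C2 g t r -> C2 (fun t r => exp (g t r)) t r.
Proof. intros H; apply (C2_comp exp g); auto. apply continuous_exp. Qed.
Lemma C2_sqrt g t r : C2 g t r -> C2 (fun t r => sqrt (g t r)) t r.
Proof. intros H; apply (C2_comp sqrt g); auto. apply continuous_sqrt. Qed.
Lemma C2_inv g t r : C2 g t r -> g t r <> 0 -> C2 (fun t r => / (g t r)) t r.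
Proof. intros H Hn; apply (C2_comp Rinv g); auto. apply continuous_Rinv; auto. Qed.
Lemma C2_div g1 g2 t r : C2 g1 t r -> C2 g2 t r -> g2 t r <> 0 -> C2 (fun t r => g1 t r / g2 t r) t r.
Proof. intros H1 H2 Hn. unfold Rdiv. apply (C2_mult g1 (fun t r => / g2 t r)); auto. apply C2_inv; auto. Qed.
Lemma C2_pow g n t r : C2 g t r -> C2 (fun t r => g t r ^ n) t r.
Proof. intros H. induction n as [|n IH]; simpl. apply C2_const. apply (C2_mult g (fun t r => g t r ^ n)); auto. Qed.

Lemma C2_1d g t r : C2 g t r -> continuous (fun t => g t r) t.
Proof. intros H.
  apply (continuous_comp_2 (fun t => t) (fun _ => r) g). apply continuous_id. apply continuous_const.
  exact H. Qed.

Lemma C2_swap g t r : C2 g t r -> continuity_2d_pt (fun u v => g v u) r t.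
Proof. intros H. apply continuity_2d_pt_filterlim.
  apply (continuous_comp_2 snd fst g (r,t)). apply continuous_snd. apply continuous_fst.
  exact H.
Qed.
Ltac rwD H := match type of H with is_derive ?f ?x ?l =>
  replace (Derive (fun y => f y) x) with l by (symmetry; apply is_derive_unique; exact H) end.

Definition Dhf (s ar ur ut urr utr Ar At Arr Atr e4 r : R) : R :=
  2*ur*urr/s - ur^2*(ar/(2*s))/s^2 + (ar/(2*s))*ut^2 + s*(2*ut*utr)
     + (4*ur*e4/(4*r^2) - e4*(8*r)/(4*r^2)^2) * (Ar^2/s + s*At^2)
     + e4/(4*r^2) * (2*Ar*Arr/s - Ar^2*(ar/(2*s))/s^2 + (ar/(2*s))*At^2 + s*(2*At*Atr)).

Lemma der_h (a u ur ut Ar At : R -> R) (ar urr utr Arr Atr : R) x :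
  is_derive a x ar -> is_derive u x (ur x) -> is_derive ur x urr -> is_derive ut x utr ->
  is_derive Ar x Arr -> is_derive At x Atr -> 0 < a x -> 0 < x ->
  is_derive (fun r => ur r ^ 2 / sqrt (a r) + sqrt (a r) * ut r ^ 2
    + exp (4 * u r) / (4 * r ^ 2) * (Ar r ^ 2 / sqrt (a r) + sqrt (a r) * At r ^ 2)) x
   (Dhf (sqrt (a x)) ar (ur x) (ut x) urr utr (Ar x) (At x) Arr Atr (exp (4 * u x)) x).
Proof.
  intros Ha Hu Hur Hut HAr HAt Hax Hx.
  assert (Hs : 0 < sqrt (a x)) by (apply sqrt_lt_R0; auto).
  auto_derive.
  - repeat split; try (eexists; eassumption); try (apply Rgt_not_eq; nra); lra.
  - rwD Ha. rwD Hu. rwD Hur. rwD Hut. rwD HAr. rwD HAt.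
    unfold Dhf. field. lra.
Qed.

Definition DFf (s ar e2 br K r : R) : R :=
  (2*br*e2*K^2*(4*s*r^4) - e2*K^2*(4*(ar/(2*s))*r^4 + 4*s*(4*r^3)))/(4*s*r^4)^2.

Lemma der_F (a b : R -> R) (ar br K : R) x :
  is_derive a x ar -> is_derive b x br -> 0 < a x -> 0 < x ->
  is_derive (fun r => exp (2 * b r) * K ^ 2 / (4 * sqrt (a r) * r ^ 4)) x
    (DFf (sqrt (a x)) ar (exp (2 * b x)) br K x).
Proof.
  intros Ha Hb Hax Hx.
  assert (Hs : 0 < sqrt (a x)) by (apply sqrt_lt_R0; auto).
  auto_derive.
  - repeat split; try (eexists; eassumption); try lra; apply Rgt_not_eq; repeat apply Rmult_lt_0_compat; lra.
  - rwD Ha. rwD Hb. unfold DFf. field. split; [lra|]. lra.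
Qed.

Definition DPf (s aT ut ur utt urt e4 At Ar Att Art r : R) : R :=
  2*(aT/(2*s))*ut*ur + 2*s*utt*ur + 2*s*ut*urt
      + (4*ut*e4*s*At*Ar + e4*(aT/(2*s))*At*Ar + e4*s*Att*Ar + e4*s*At*Art)/(2*r^2).

Lemma der_P (a u ut ur At Ar : R -> R) (aT utt urt Att Art r : R) x :
  is_derive a x aT -> is_derive u x (ut x) -> is_derive ut x utt -> is_derive ur x urt ->
  is_derive At x Att -> is_derive Ar x Art -> 0 < a x -> 0 < r ->
  is_derive (fun t => 2 * sqrt (a t) * ut t * ur t + exp (4 * u t) * sqrt (a t) * At t * Ar t / (2 * r ^ 2)) x
    (DPf (sqrt (a x)) aT (ut x) (ur x) utt urt (exp (4 * u x)) (At x) (Ar x) Att Art r).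
Proof.
  intros Ha Hu Hut Hur HAt HAr Hax Hr.
  assert (Hs : 0 < sqrt (a x)) by (apply sqrt_lt_R0; auto).
  auto_derive.
  - repeat split; try (eexists; eassumption); try (apply Rgt_not_eq; nra); lra.
  - rwD Ha. rwD Hu. rwD Hut. rwD Hur. rwD HAt. rwD HAr. unfold DPf. field. lra.
Qed.

Lemma smR D f ds t r : smooth_on D f -> D t r -> is_derive (fun r' => pd ds f t r') r (pd (true::ds) f t r).
Proof. intros H Hd. destruct (H ds t r Hd) as [H1 _]. apply Derive_correct in H1. exact H1. Qed.
Lemma smT D f ds t r : smooth_on D f -> D t r -> is_derive (fun t' => pd ds f t' r) t (pd (false::ds) f t r).
Proof. intros H Hd. destruct (H ds t r Hd) as [_ [H1 _]]. apply Derive_correct in H1. exact H1. Qed.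
Lemma smC D f ds t r : smooth_on D f -> D t r -> C2 (pd ds f) t r.
Proof. intros H Hd. destruct (H ds t r Hd) as [_ [_ H1]]. exact H1. Qed.

Lemma C2_ln g t r : C2 g t r -> 0 < g t r -> C2 (fun t r => ln (g t r)) t r.
Proof. intros H Hp; apply (C2_comp ln g); auto. apply continuous_ln; auto. Qed.

Ltac smc ds f := eapply (smC _ f ds); eassumption.
Ltac base := match goal with
  | |- C2 (fun t r => dR (dR ?f) t r) _ _ => smc (true::true::nil) f
  | |- C2 (fun t r => dR (dT ?f) t r) _ _ => smc (true::false::nil) f
  | |- C2 (fun t r => dT (dR ?f) t r) _ _ => smc (false::true::nil) f
  | |- C2 (fun t r => dT (dT ?f) t r) _ _ => smc (false::false::nil) f
  | |- C2 (fun t r => dR ?f t r) _ _ => smc (true::nil) f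
  | |- C2 (fun t r => dT ?f t r) _ _ => smc (false::nil) f
  | |- C2 (fun t r => ?f t r) _ _ => is_var f; smc (@nil bool) f
  | |- C2 (dR (dR ?f)) _ _ => smc (true::true::nil) f
  | |- C2 (dR (dT ?f)) _ _ => smc (true::false::nil) f
  | |- C2 (dT (dR ?f)) _ _ => smc (false::true::nil) f
  | |- C2 (dT (dT ?f)) _ _ => smc (false::false::nil) f
  | |- C2 (dR ?f) _ _ => smc (true::nil) f
  | |- C2 (dT ?f) _ _ => smc (false::nil) f
  | |- C2 ?f _ _ => is_var f; smc (@nil bool) f
  end.

Ltac c2step := match goal with
  | |- C2 (fun t r => ?c) _ _ => apply C2_const
  | |- C2 (fun t r => r) _ _ => apply C2_snd
  | |- C2 (fun t r => _ + _) _ _ => apply C2_plus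
  | |- C2 (fun t r => _ - _) _ _ => apply C2_minus
  | |- C2 (fun t r => _ * _) _ _ => apply C2_mult
  | |- C2 (fun t r => _ / _) _ _ => apply C2_div
  | |- C2 (fun t r => - _) _ _ => apply C2_opp
  | |- C2 (fun t r => exp _) _ _ => apply C2_exp
  | |- C2 (fun t r => sqrt _) _ _ => apply C2_sqrt
  | |- C2 (fun t r => ln _) _ _ => apply C2_ln
  | |- C2 (fun t r => / _) _ _ => apply C2_inv
  | |- C2 (fun t r => _ ^ _) _ _ => apply C2_pow
  | |- C2 _ _ _ => base
  end.
Ltac c2 := repeat c2step.


Lemma C2_pos g t r : C2 g t r -> 0 < g t r -> locally (t,r) (fun p : R * R => 0 < g (fst p) (snd p)).
Proof. intros H Hp. apply (H (fun y => 0 < y)).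
  exists (mkposreal _ Hp). intros y Hy. change (Rabs (y - g t r) < g t r) in Hy.
  apply Rabs_def2 in Hy. lra. Qed.

Lemma loc_abs x (P : R -> Prop) (eps : posreal) : (forall y, Rabs (y - x) < eps -> P y) -> locally x P.
Proof. intros H. exists eps. intros y Hy. apply H. exact Hy. Qed.

Lemma loc_int a b x : a < x < b -> locally x (fun y => a < y < b).
Proof. intros H. assert (He : 0 < Rmin (x - a) (b - x)) by (apply Rmin_pos; lra).
  apply (loc_abs x _ (mkposreal _ He)). intros y Hy. simpl in Hy.
  apply Rabs_def2 in Hy. destruct Hy as [H1 H2].
  pose proof (Rmin_l (x-a) (b-x)). pose proof (Rmin_r (x-a) (b-x)). lra. Qed.

Lemma unif_pos g r0 : (forall t, 0 <= t <= 1 -> C2 g t r0 /\ 0 < g t r0) ->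
  exists eps : posreal, forall t r, 0 <= t <= 1 -> Rabs (r - r0) < eps -> 0 < g t r.
Proof.
  intros H.
  assert (Hd : forall t, {d : posreal | 0 <= t <= 1 -> forall u v, Rabs (u - t) < d -> Rabs (v - r0) < d -> 0 < g u v}).
  { intro t. apply constructive_indefinite_description.
    destruct (classic (0 <= t <= 1)) as [Ht|Ht].
    - destruct (H t Ht) as [Hc Hp]. pose proof (C2_pos g t r0 Hc Hp) as L.
      apply (proj2 (locally_2d_locally (fun u v => 0 < g u v) t r0)) in L.
      destruct L as [d Hd]. exists d. intros _. exact Hd.
    - exists (mkposreal 1 Rlt_0_1). intros. contradiction. }
  destruct (compactness_value_1d 0 1 (fun t => proj1_sig (Hd t))) as [d Hdd].
  exists d. intros t r Ht Hr.
  apply Rnot_le_lt; intro Hle. apply (Hdd t Ht). intros [t' [Ht' [H1 H2]]].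
  pose proof (proj2_sig (Hd t') Ht' t r H1) as P. simpl in H2.
  assert (0 < g t r) by (apply P; lra). lra.
Qed.

Lemma per_dT f r : periodic1 f -> dT f 1 r = dT f 0 r.
Proof. intros H. unfold dT, Derive. f_equal. apply Lim_ext. intro h.
  replace (1 + h) with ((0 + h) + 1) by ring. rewrite H.
  replace 1 with (0 + 1) by ring. rewrite H. reflexivity. Qed.
Lemma per_dR f r : periodic1 f -> dR f 1 r = dR f 0 r.
Proof. intros H. unfold dR. apply Derive_ext. intro z.
  replace 1 with (0 + 1) by ring. apply H. Qed.
Lemma per_0 f r : periodic1 f -> f 1 r = f 0 r.
Proof. intros H. replace 1 with (0 + 1) by ring. apply H. Qed.

Lemma key (a s r K ur ut urr utt urt utr Ar At Arr Att Art Atr ar aT e4 e2 br : R) :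
  a = s * s -> 0 < s -> 0 < r ->
  br = s * r * (ur ^ 2 / s + s * ut ^ 2 + e4 / (4 * r ^ 2) * (Ar ^ 2 / s + s * At ^ 2))
       - e2 * K ^ 2 / (4 * r ^ 3) ->
  ar = - (a * e2 * K ^ 2 / r ^ 3) ->
  urr - a * utt = - (ur / r) + ar * ur / (2 * a) + aT * ut / 2
    + e4 / (2 * r ^ 2) * (Ar ^ 2 - a * At ^ 2) ->
  Arr - a * Att = Ar / r + ar * Ar / (2 * a) + aT * At / 2
    - 4 * Ar * ur + 4 * a * At * ut ->
  utr = urt -> Atr = Art ->
  Dhf s ar ur ut urr utr Ar At Arr Atr e4 r + DFf s ar e2 br K r
  = DPf s aT ut ur utt urt e4 At Ar Att Art r
    - (e2*K^2/(s*r^5) + 2*ur^2/(s*r) + s*e4*At^2/(2*r^3)).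
Proof.
  intros Ha Hs Hr Hbr Har Hu HA H1 H2. subst a.
  assert (Hurr : urr = s*s*utt + (- (ur / r) + ar * ur / (2 * (s*s)) + aT * ut / 2
    + e4 / (2 * r ^ 2) * (Ar ^ 2 - s*s * At ^ 2))) by lra.
  assert (HArr : Arr = s*s*Att + (Ar / r + ar * Ar / (2 * (s*s)) + aT * At / 2
    - 4 * Ar * ur + 4 * (s*s) * At * ut)) by lra.
  unfold Dhf, DFf, DPf.
  rewrite Hurr, HArr, H1, H2, Hbr. clear Hurr HArr Hbr Hu HA. subst ar.
  field. lra.
Qed.

Lemma key2 s r K ur ut Ar At e4 e2 : 0 < s -> 0 < r -> 0 < e4 -> 0 <= e2 ->
  0 <= 4 * (ur^2/s + s*ut^2 + e4/(4*r^2)*(Ar^2/s + s*At^2) + e2*K^2/(4*s*r^4))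
       - r * (e2*K^2/(s*r^5) + 2*ur^2/(s*r) + s*e4*At^2/(2*r^3)).
Proof.
  intros Hs Hr He He2.
  replace (4 * (ur^2/s + s*ut^2 + e4/(4*r^2)*(Ar^2/s + s*At^2) + e2*K^2/(4*s*r^4))
       - r * (e2*K^2/(s*r^5) + 2*ur^2/(s*r) + s*e4*At^2/(2*r^3)))
   with (2*(ur^2 * /s) + 4*s*ut^2 + e4*Ar^2 * / (r^2*s) + e4*s*At^2 * /(2*r^2)) by (field; lra).
  assert (0 < / s) by (apply Rinv_0_lt_compat; lra).
  assert (0 < / (r^2*s)) by (apply Rinv_0_lt_compat; apply Rmult_lt_0_compat; [apply pow_lt|]; lra).
  assert (0 < / (2*r^2)) by (apply Rinv_0_lt_compat; apply Rmult_lt_0_compat; [|apply pow_lt]; lra).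
  pose proof (pow2_ge_0 ur). pose proof (pow2_ge_0 ut). pose proof (pow2_ge_0 Ar). pose proof (pow2_ge_0 At).
  repeat apply Rplus_le_le_0_compat; repeat (first [lra | apply Rmult_le_pos]).
Qed.

Definition DH (alpha U A : R -> R -> R) (t r : R) : R :=
  Dhf (sqrt (alpha t r)) (dR alpha t r) (dR U t r) (dT U t r) (dR (dR U) t r) (dR (dT U) t r)
      (dR A t r) (dT A t r) (dR (dR A) t r) (dR (dT A) t r) (exp (4 * U t r)) r.
Definition FF (alpha nu : R -> R -> R) (K t r : R) : R :=
  exp (2 * beta nu alpha t r) * K ^ 2 / (4 * sqrt (alpha t r) * r ^ 4).
Definition DF (alpha nu : R -> R -> R) (K t r : R) : R :=
  DFf (sqrt (alpha t r)) (dR alpha t r) (exp (2 * beta nu alpha t r))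
      (dR nu t r + dR alpha t r / (2 * alpha t r)) K r.
Definition TG (alpha nu U A : R -> R -> R) (K t r : R) : R :=
  exp (2 * beta nu alpha t r) * K ^ 2 / (sqrt (alpha t r) * r ^ 5)
  + 2 * (dR U t r) ^ 2 / (sqrt (alpha t r) * r)
  + sqrt (alpha t r) * exp (4 * U t r) * (dT A t r) ^ 2 / (2 * r ^ 3).
Definition PH (alpha U A : R -> R -> R) (r t : R) : R :=
  2 * sqrt (alpha t r) * dT U t r * dR U t r
  + exp (4 * U t r) * sqrt (alpha t r) * dT A t r * dR A t r / (2 * r ^ 2).
Definition DP (alpha U A : R -> R -> R) (t r : R) : R :=
  DPf (sqrt (alpha t r)) (dT alpha t r) (dT U t r) (dR U t r) (dT (dT U) t r) (dT (dR U) t r)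
      (exp (4 * U t r)) (dT A t r) (dR A t r) (dT (dT A) t r) (dT (dR A) t r) r.


Lemma GP_h D alpha U A t r : smooth_on D alpha -> smooth_on D U -> smooth_on D A -> D t r ->
  0 < alpha t r -> 0 < r -> is_derive (fun z => hdens alpha U A t z) r (DH alpha U A t r).
Proof.
  intros Ha HU HA Hd Hp Hr. unfold DH.
  refine (der_h (alpha t) (U t) (dR U t) (dT U t) (dR A t) (dT A t) _ _ _ _ _ r _ _ _ _ _ _ Hp Hr).
  - exact (smR D alpha nil t r Ha Hd).
  - exact (smR D U nil t r HU Hd).
  - exact (smR D U (true::nil) t r HU Hd).
  - exact (smR D U (false::nil) t r HU Hd).
  - exact (smR D A (true::nil) t r HA Hd).
  - exact (smR D A (false::nil) t r HA Hd).
Qed.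

Lemma GP_b D alpha nu t r : smooth_on D alpha -> smooth_on D nu -> D t r -> 0 < alpha t r ->
  is_derive (fun z => beta nu alpha t z) r (dR nu t r + dR alpha t r / (2 * alpha t r)).
Proof.
  intros Ha Hn Hd Hp.
  pose proof (smR D alpha nil t r Ha Hd) as H1. pose proof (smR D nu nil t r Hn Hd) as H2.
  change (is_derive (alpha t) r (dR alpha t r)) in H1.
  change (is_derive (nu t) r (dR nu t r)) in H2.
  unfold beta. auto_derive.
  - repeat split; try (eexists; eassumption); lra.
  - rwD H1. rwD H2. field. lra.
Qed.

Lemma GP_F D alpha nu K t r : smooth_on D alpha -> smooth_on D nu -> D t r ->
  0 < alpha t r -> 0 < r -> is_derive (fun z => FF alpha nu K t z) r (DF alpha nu K t r).
Proof.
  intros Ha Hn Hd Hp Hr. unfold FF, DF.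
  refine (der_F (alpha t) (fun z => beta nu alpha t z) _ _ K r _ _ Hp Hr).
  - exact (smR D alpha nil t r Ha Hd).
  - exact (GP_b D alpha nu t r Ha Hn Hd Hp).
Qed.

Ltac pos_tac := repeat (first [assumption | apply Rmult_lt_0_compat | apply pow_lt | apply Rinv_0_lt_compat | lra]).
Ltac side_tac Hs := cbv beta; try assumption; apply Rgt_not_eq; pos_tac.

Lemma GP_C D alpha nu U A K t r : smooth_on D alpha -> smooth_on D nu -> smooth_on D U -> smooth_on D A ->
  D t r -> 0 < alpha t r -> 0 < r ->
  C2 (hdens alpha U A) t r /\ C2 (FF alpha nu K) t r /\ C2 (DH alpha U A) t r /\
  C2 (DF alpha nu K) t r /\ C2 (TG alpha nu U A K) t r /\ C2 (DP alpha U A) t r.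
Proof.
  intros Ha Hn HU HA Hd Hp Hr.
  assert (Hs : 0 < sqrt (alpha t r)) by (apply sqrt_lt_R0; auto).
  split; [|split; [|split; [|split; [|split]]]].
  - change (C2 (fun t r => hdens alpha U A t r) t r). unfold hdens. c2. all: side_tac Hs.
  - change (C2 (fun t r => FF alpha nu K t r) t r). unfold FF, beta. c2. all: side_tac Hs.
  - change (C2 (fun t r => DH alpha U A t r) t r). unfold DH, Dhf. c2. all: side_tac Hs.
  - change (C2 (fun t r => DF alpha nu K t r) t r). unfold DF, DFf, beta. c2. all: side_tac Hs.
  - change (C2 (fun t r => TG alpha nu U A K t r) t r). unfold TG, beta. c2. all: side_tac Hs.
  - change (C2 (fun t r => DP alpha U A t r) t r). unfold DP, DPf. c2. all: side_tac Hs.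
Qed.

Lemma good_loc (alpha : R -> R -> R) Rs Rb t r : C2 alpha t r -> 0 < alpha t r -> Rs < r < Rb ->
  locally (t,r) (fun p : R * R => Rs < snd p < Rb /\ 0 < alpha (fst p) (snd p)).
Proof.
  intros Hc Hp Hr.
  assert (H1 : C2 (fun t r => r - Rs) t r) by c2.
  assert (H2 : C2 (fun t r => Rb - r) t r) by c2.
  pose proof (C2_pos _ _ _ H1 ltac:(lra)) as L1.
  pose proof (C2_pos _ _ _ H2 ltac:(lra)) as L2.
  pose proof (C2_pos _ _ _ Hc Hp) as L3.
  generalize (filter_and _ _ (filter_and _ _ L1 L2) L3).
  apply filter_imp. intros p [[P1 P2] P3]. simpl in *. split; [split|]; lra.
Qed.

Lemma GP_cont Rs Rb alpha nu U A K t r :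
  let D := fun t r : R => Rs < r < Rb in
  0 <= Rs ->
  smooth_on D alpha -> smooth_on D nu -> smooth_on D U -> smooth_on D A ->
  Rs < r < Rb -> 0 < alpha t r ->
  C2 (fun t r => Derive (fun z => hdens alpha U A t z) r) t r /\
  C2 (fun t r => Derive (fun z => FF alpha nu K t z) r) t r.
Proof.
  intros D HRs Ha Hn HU HA Hd Hp.
  assert (Hca : C2 alpha t r) by (exact (smC D alpha nil t r Ha Hd)).
  pose proof (good_loc alpha Rs Rb t r Hca Hp Hd) as L.
  destruct (GP_C D alpha nu U A K t r Ha Hn HU HA Hd Hp ltac:(lra)) as [_ [_ [C3 [C4 _]]]].
  split.
  - apply (continuous_ext_loc _ (fun p : R * R => DH alpha U A (fst p) (snd p))); [|exact C3].
    generalize L. apply filter_imp. intros [u v] [P1 P2]. simpl in *.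
    symmetry. apply is_derive_unique. apply (GP_h D); auto. lra.
  - apply (continuous_ext_loc _ (fun p : R * R => DF alpha nu K (fst p) (snd p))); [|exact C4].
    generalize L. apply filter_imp. intros [u v] [P1 P2]. simpl in *.
    symmetry. apply is_derive_unique. apply (GP_F D); auto. lra.
Qed.

Lemma schw D f t r : smooth_on D f -> locally (t,r) (fun p : R * R => D (fst p) (snd p)) -> D t r ->
  dR (dT f) t r = dT (dR f) t r.
Proof.
  intros H L Hd. symmetry.
  apply (Schwarz f t r).
  - apply (proj2 (locally_2d_locally _ t r)). generalize L. apply filter_imp.
    intros [u v] Huv. simpl in Huv. simpl.
    split; [|split; [|split]].
    + exact (ex_intro _ _ (smT D f nil u v H Huv)).
    + exact (ex_intro _ _ (smR D f nil u v H Huv)).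
    + exact (ex_intro _ _ (smT D f (true::nil) u v H Huv)).
    + exact (ex_intro _ _ (smR D f (false::nil) u v H Huv)).
  - apply continuity_2d_pt_filterlim. exact (smC D f (false::true::nil) t r H Hd).
  - apply continuity_2d_pt_filterlim. exact (smC D f (true::false::nil) t r H Hd).
Qed.

Lemma pt_id D alpha nu U A G H K t r :
  smooth_on D alpha -> smooth_on D nu -> smooth_on D U -> smooth_on D A ->
  locally (t,r) (fun p : R * R => D (fst p) (snd p)) -> D t r ->
  0 < alpha t r -> 0 < r -> vacuum_eqs alpha nu U A G H K t r ->
  DH alpha U A t r + DF alpha nu K t r = DP alpha U A t r - TG alpha nu U A K t r.
Proof.
  intros Ha Hn HU HA L Hd Hp Hr Hv.
  destruct Hv as [Eb [_ [Ea [EU [EA _]]]]].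
  assert (Hs : 0 < sqrt (alpha t r)) by (apply sqrt_lt_R0; auto).
  unfold DH, DF, DP, TG.
  apply (key (alpha t r) (sqrt (alpha t r)) r K (dR U t r) (dT U t r) (dR (dR U) t r) (dT (dT U) t r)
     (dT (dR U) t r) (dR (dT U) t r) (dR A t r) (dT A t r) (dR (dR A) t r) (dT (dT A) t r)
     (dT (dR A) t r) (dR (dT A) t r) (dR alpha t r) (dT alpha t r) (exp (4 * U t r))
     (exp (2 * beta nu alpha t r)) (dR nu t r + dR alpha t r / (2 * alpha t r))).
  - symmetry. apply sqrt_sqrt. lra.
  - exact Hs.
  - exact Hr.
  - rewrite <- (is_derive_unique _ _ _ (GP_b D alpha nu t r Ha Hn Hd Hp)).
    exact Eb.
  - exact Ea.
  - exact EU.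
  - exact EA.
  - exact (schw D U t r HU L Hd).
  - exact (schw D A t r HA L Hd).
Qed.

Lemma part1 Rs Ri delta K (alpha nu U A G H : R -> R -> R) r0 :
  0 < Rs -> Rs < Ri -> 0 < delta ->
  smooth_on (fun t r => Rs < r < Ri + delta) alpha ->
  smooth_on (fun t r => Rs < r < Ri + delta) nu ->
  smooth_on (fun t r => Rs < r < Ri + delta) U ->
  smooth_on (fun t r => Rs < r < Ri + delta) A ->
  periodic1 alpha -> periodic1 U -> periodic1 A ->
  (forall t r, Rs < r <= Ri -> 0 < alpha t r) ->
  (forall t r, Rs < r <= Ri -> vacuum_eqs alpha nu U A G H K t r) ->
  Rs < r0 <= Ri ->
  is_derive (fun s => Etilde alpha nu U A K s) r0 (- RInt (fun t => TG alpha nu U A K t r0) 0 1)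
  /\ ex_RInt (fun t => TG alpha nu U A K t r0) 0 1
  /\ ex_RInt (fun t => hdens alpha U A t r0) 0 1 /\ ex_RInt (fun t => FF alpha nu K t r0) 0 1.
Proof.
  intros HRs HRsi Hdelta Ha Hn HU HA Pa PU PA Halpha Heqs Hr0.
  set (D := fun t r : R => Rs < r < Ri + delta) in *.
  assert (Hd0 : forall t, D t r0) by (intros; unfold D; lra).
  assert (Hp0 : forall t, 0 < alpha t r0) by (intros; apply Halpha; lra).
  assert (Hpos0 : 0 < r0) by lra.
  destruct (unif_pos alpha r0 (fun t Ht => conj (smC D alpha nil t r0 Ha (Hd0 t)) (Hp0 t))) as [eps Heps].
  assert (Lstrip : locally r0 (fun x => Rs < x < Ri + delta)) by (apply loc_int; lra).
  assert (Lunif : locally r0 (fun x => forall t, 0 <= t <= 1 -> 0 < alpha t x)).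
  { apply (loc_abs r0 _ eps). intros y Hy t Ht. apply Heps; auto. }
  pose proof (filter_and _ _ Lstrip Lunif) as LN.
  assert (Hmm : Rmin 0 1 = 0 /\ Rmax 0 1 = 1) by (split; [apply Rmin_left|apply Rmax_right]; lra).
  destruct Hmm as [Hmin Hmax].
  assert (GC : forall t r, Rs < r < Ri + delta -> 0 < alpha t r ->
     C2 (hdens alpha U A) t r /\ C2 (FF alpha nu K) t r /\ C2 (DH alpha U A) t r /\
     C2 (DF alpha nu K) t r /\ C2 (TG alpha nu U A K) t r /\ C2 (DP alpha U A) t r).
  { intros t r Hr Hp. apply (GP_C D); auto; lra. }
  assert (GCh : forall t r, Rs < r < Ri + delta -> 0 < alpha t r -> C2 (hdens alpha U A) t r)
    by (intros t r Hr Hp; destruct (GC t r Hr Hp) as (X1&X2&X3&X4&X5&X6); exact X1).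
  assert (GCF : forall t r, Rs < r < Ri + delta -> 0 < alpha t r -> C2 (FF alpha nu K) t r)
    by (intros t r Hr Hp; destruct (GC t r Hr Hp) as (X1&X2&X3&X4&X5&X6); exact X2).
  assert (GCDH : forall t r, Rs < r < Ri + delta -> 0 < alpha t r -> C2 (DH alpha U A) t r)
    by (intros t r Hr Hp; destruct (GC t r Hr Hp) as (X1&X2&X3&X4&X5&X6); exact X3).
  assert (GCDF : forall t r, Rs < r < Ri + delta -> 0 < alpha t r -> C2 (DF alpha nu K) t r)
    by (intros t r Hr Hp; destruct (GC t r Hr Hp) as (X1&X2&X3&X4&X5&X6); exact X4).
  assert (GCTG : forall t r, Rs < r < Ri + delta -> 0 < alpha t r -> C2 (TG alpha nu U A K) t r)
    by (intros t r Hr Hp; destruct (GC t r Hr Hp) as (X1&X2&X3&X4&X5&X6); exact X5).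
  assert (GCDP : forall t r, Rs < r < Ri + delta -> 0 < alpha t r -> C2 (DP alpha U A) t r)
    by (intros t r Hr Hp; destruct (GC t r Hr Hp) as (X1&X2&X3&X4&X5&X6); exact X6).
  assert (GD : forall t r, Rs < r < Ri + delta -> 0 < alpha t r ->
     C2 (fun t r => Derive (fun z => hdens alpha U A t z) r) t r /\
     C2 (fun t r => Derive (fun z => FF alpha nu K t z) r) t r).
  { intros t r Hr Hp. apply (GP_cont Rs (Ri + delta)); auto; lra. }
  assert (DE : is_derive (fun x => RInt (fun t => hdens alpha U A t x) 0 1) r0
                 (RInt (fun t => Derive (fun u => hdens alpha U A t u) r0) 0 1)).
  { apply (is_derive_RInt_param (fun u t => hdens alpha U A t u) 0 1 r0).
    - generalize LN. apply filter_imp. intros x [Hx Hux] t Ht. rewrite Hmin, Hmax in Ht.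
      eexists. apply (GP_h D); auto; lra.
    - intros t Ht. rewrite Hmin, Hmax in Ht.
      apply (C2_swap (fun t r => Derive (fun z => hdens alpha U A t z) r)).
      exact (proj1 (GD t r0 ltac:(lra) (Hp0 t))).
    - generalize LN. apply filter_imp. intros x [Hx Hux].
      apply (@ex_RInt_continuous R_CompleteNormedModule). intros z Hz. rewrite Hmin, Hmax in Hz.
      apply (C2_1d (hdens alpha U A)). apply GCh; auto. }
  assert (DFF : is_derive (fun x => RInt (fun t => FF alpha nu K t x) 0 1) r0
                 (RInt (fun t => Derive (fun u => FF alpha nu K t u) r0) 0 1)).
  { apply (is_derive_RInt_param (fun u t => FF alpha nu K t u) 0 1 r0).
    - generalize LN. apply filter_imp. intros x [Hx Hux] t Ht. rewrite Hmin, Hmax in Ht.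
      eexists. apply (GP_F D); auto; lra.
    - intros t Ht. rewrite Hmin, Hmax in Ht.
      apply (C2_swap (fun t r => Derive (fun z => FF alpha nu K t z) r)).
      exact (proj2 (GD t r0 ltac:(lra) (Hp0 t))).
    - generalize LN. apply filter_imp. intros x [Hx Hux].
      apply (@ex_RInt_continuous R_CompleteNormedModule). intros z Hz. rewrite Hmin, Hmax in Hz.
      apply (C2_1d (FF alpha nu K)). apply GCF; auto. }
  assert (exI : forall g : R -> R -> R, (forall t, 0 <= t <= 1 -> C2 g t r0) -> ex_RInt (fun t => g t r0) 0 1).
  { intros g Hg. apply (@ex_RInt_continuous R_CompleteNormedModule). intros z Hz. rewrite Hmin, Hmax in Hz.
    apply C2_1d. apply Hg; auto. }
  assert (exDH : ex_RInt (fun t => DH alpha U A t r0) 0 1) by (apply exI; intros; apply GCDH; auto; lra).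
  assert (exDF : ex_RInt (fun t => DF alpha nu K t r0) 0 1) by (apply exI; intros; apply GCDF; auto; lra).
  assert (exTG : ex_RInt (fun t => TG alpha nu U A K t r0) 0 1) by (apply exI; intros; apply GCTG; auto; lra).
  assert (exDP : ex_RInt (fun t => DP alpha U A t r0) 0 1) by (apply exI; intros; apply GCDP; auto; lra).
  assert (exh : ex_RInt (fun t => hdens alpha U A t r0) 0 1) by (apply exI; intros; apply GCh; auto; lra).
  assert (exF : ex_RInt (fun t => FF alpha nu K t r0) 0 1) by (apply exI; intros; apply GCF; auto; lra).
  split; [|split; [exact exTG|split; [exact exh|exact exF]]].
  pose proof (is_derive_plus _ _ _ _ _ DE DFF) as DT.
  replace (- RInt (fun t => TG alpha nu U A K t r0) 0 1) with
    (RInt (fun t => Derive (fun u => hdens alpha U A t u) r0) 0 1 +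
     RInt (fun t => Derive (fun u => FF alpha nu K t u) r0) 0 1).
  { exact DT. }
  rewrite (RInt_ext _ (fun t => DH alpha U A t r0)).
  2:{ intros x Hx. rewrite Hmin, Hmax in Hx. apply is_derive_unique. apply (GP_h D); auto; lra. }
  rewrite (RInt_ext (fun t => Derive (fun u => FF alpha nu K t u) r0) (fun t => DF alpha nu K t r0)).
  2:{ intros x Hx. rewrite Hmin, Hmax in Hx. apply is_derive_unique. apply (GP_F D); auto; lra. }
  transitivity (RInt (fun t => DH alpha U A t r0 + DF alpha nu K t r0) 0 1).
  { symmetry. exact (RInt_plus _ _ 0 1 exDH exDF). }
  rewrite (RInt_ext _ (fun t => DP alpha U A t r0 - TG alpha nu U A K t r0)).
  2:{ intros x Hx. rewrite Hmin, Hmax in Hx.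
      assert (LL : locally (x, r0) (fun p : R * R => D (fst p) (snd p))).
      { apply (proj1 (locally_2d_locally (fun u v => D u v) x r0)).
        exists (mkposreal _ (Rmin_pos (r0 - Rs) (Ri + delta - r0) ltac:(lra) ltac:(lra))).
        intros u v _ Hv. simpl in Hv. apply Rabs_def2 in Hv. unfold D.
        pose proof (Rmin_l (r0 - Rs) (Ri + delta - r0)). pose proof (Rmin_r (r0 - Rs) (Ri + delta - r0)). lra. }
      exact (pt_id D alpha nu U A G H K x r0 Ha Hn HU HA LL (Hd0 x) (Hp0 x) Hpos0 (Heqs x r0 ltac:(lra))). }
  transitivity (RInt (fun t => DP alpha U A t r0) 0 1 - RInt (fun t => TG alpha nu U A K t r0) 0 1).
  { exact (RInt_minus _ _ 0 1 exDP exTG). }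
  assert (HP : RInt (fun t => DP alpha U A t r0) 0 1 = 0).
  { assert (HI : is_RInt (fun t => DP alpha U A t r0) 0 1 (minus (PH alpha U A r0 1) (PH alpha U A r0 0))).
    { apply (@is_RInt_derive R_CompleteNormedModule (PH alpha U A r0) (fun t => DP alpha U A t r0) 0 1).
      - intros t Ht. rewrite Hmin, Hmax in Ht. unfold DP, PH.
        refine (der_P (fun t => alpha t r0) (fun t => U t r0) (fun t => dT U t r0) (fun t => dR U t r0)
                 (fun t => dT A t r0) (fun t => dR A t r0) _ _ _ _ _ r0 t _ _ _ _ _ _ (Hp0 t) Hpos0).
        + exact (smT D alpha nil t r0 Ha (Hd0 t)).
        + exact (smT D U nil t r0 HU (Hd0 t)).
        + exact (smT D U (false::nil) t r0 HU (Hd0 t)).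
        + exact (smT D U (true::nil) t r0 HU (Hd0 t)).
        + exact (smT D A (false::nil) t r0 HA (Hd0 t)).
        + exact (smT D A (true::nil) t r0 HA (Hd0 t)).
      - intros t Ht. rewrite Hmin, Hmax in Ht. apply (C2_1d (DP alpha U A)). apply GCDP; auto; lra. }
    apply (@is_RInt_unique R_CompleteNormedModule) in HI. rewrite HI.
    unfold PH. rewrite (per_0 alpha r0 Pa), (per_0 U r0 PU), (per_dT U r0 PU), (per_dR U r0 PU),
      (per_dT A r0 PA), (per_dR A r0 PA).
    unfold minus, plus, opp. simpl. ring. }
  rewrite HP. ring.
Qed.

Lemma TG_nonneg s r K ur At e4 e2 : 0 < s -> 0 < r -> 0 < e4 -> 0 < e2 ->
  0 <= e2*K^2/(s*r^5) + 2*ur^2/(s*r) + s*e4*At^2/(2*r^3).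
Proof.
  intros Hs Hr He He2. unfold Rdiv.
  assert (0 < / (s*r^5)) by (apply Rinv_0_lt_compat; apply Rmult_lt_0_compat; [|apply pow_lt]; lra).
  assert (0 < / (s*r)) by (apply Rinv_0_lt_compat; apply Rmult_lt_0_compat; lra).
  assert (0 < / (2*r^3)) by (apply Rinv_0_lt_compat; apply Rmult_lt_0_compat; [|apply pow_lt]; lra).
  pose proof (pow2_ge_0 ur). pose proof (pow2_ge_0 K). pose proof (pow2_ge_0 At).
  repeat apply Rplus_le_le_0_compat; repeat (first [lra | apply Rmult_le_pos]).
Qed.

Theorem mainTheorem5
  (Rs Ri delta K : R) (alpha nu U A G H : R -> R -> R)
  (HRs : 0 < Rs) (HRsi : Rs < Ri) (Hdelta : 0 < delta) (HK : 0 <= K)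
  (Hsm_alpha : smooth_on (fun t r => Rs < r < Ri + delta) alpha)
  (Hsm_nu : smooth_on (fun t r => Rs < r < Ri + delta) nu)
  (Hsm_U : smooth_on (fun t r => Rs < r < Ri + delta) U)
  (Hsm_A : smooth_on (fun t r => Rs < r < Ri + delta) A)
  (Hsm_G : smooth_on (fun t r => Rs < r < Ri + delta) G)
  (Hsm_H : smooth_on (fun t r => Rs < r < Ri + delta) H)
  (Hper_alpha : periodic1 alpha) (Hper_nu : periodic1 nu) (Hper_U : periodic1 U)
  (Hper_A : periodic1 A) (Hper_G : periodic1 G) (Hper_H : periodic1 H)
  (Halpha : forall t r, Rs < r <= Ri -> 0 < alpha t r)
  (Heqs : forall t r, Rs < r <= Ri -> vacuum_eqs alpha nu U A G H K t r) :
  (forall r, Rs < r <= Ri ->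
     is_derive (fun s => Etilde alpha nu U A K s) r
       (- RInt (fun t =>
            exp (2 * beta nu alpha t r) * K ^ 2 / (sqrt (alpha t r) * r ^ 5)
            + 2 * (dR U t r) ^ 2 / (sqrt (alpha t r) * r)
            + sqrt (alpha t r) * exp (4 * U t r) * (dT A t r) ^ 2 / (2 * r ^ 3))
          0 1) /\
     - RInt (fun t =>
            exp (2 * beta nu alpha t r) * K ^ 2 / (sqrt (alpha t r) * r ^ 5)
            + 2 * (dR U t r) ^ 2 / (sqrt (alpha t r) * r)
            + sqrt (alpha t r) * exp (4 * U t r) * (dT A t r) ^ 2 / (2 * r ^ 3))
          0 1 <= 0)
  /\
  (forall Rk, Rs < Rk <= Ri ->
     Etilde alpha nu U A K Rk <= Etilde alpha nu U A K Ri * (Ri / Rk) ^ 4).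
Proof.
  pose proof (fun r Hr => part1 Rs Ri delta K alpha nu U A G H r HRs HRsi Hdelta
     Hsm_alpha Hsm_nu Hsm_U Hsm_A Hper_alpha Hper_U Hper_A Halpha Heqs Hr) as P1.
  assert (TGpos : forall r t, Rs < r <= Ri -> 0 <= TG alpha nu U A K t r).
  { intros r t Hr. unfold TG.
    apply TG_nonneg; [apply sqrt_lt_R0; apply Halpha; lra | lra | apply exp_pos | apply exp_pos]. }
  assert (IT : forall r, Rs < r <= Ri -> 0 <= RInt (fun t => TG alpha nu U A K t r) 0 1).
  { intros r Hr. apply RInt_ge_0; [lra | exact (proj1 (proj2 (P1 r Hr))) |].
    intros t Ht. apply TGpos; auto. }
  split.
  { intros r Hr. split.
    - exact (proj1 (P1 r Hr)).
    - pose proof (IT r Hr) as X. unfold TG in X. lra. }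
  intros Rk HRk.
  set (g := fun x => x ^ 4 * Etilde alpha nu U A K x).
  set (df := fun x => 4 * x ^ 3 * Etilde alpha nu U A K x + x ^ 4 * (- RInt (fun t => TG alpha nu U A K t x) 0 1)).
  assert (Dg : forall x, Rs < x <= Ri -> is_derive g x (df x)).
  { intros x Hx. destruct (P1 x Hx) as [DE _]. unfold g, df. auto_derive.
    - eexists. exact DE.
    - rwD DE. ring. }
  assert (dfpos : forall x, Rs < x <= Ri -> 0 <= df x).
  { intros x Hx. destruct (P1 x Hx) as [_ [eT [eh eF]]].
    pose proof (RInt_correct _ _ _ eh) as I1. pose proof (RInt_correct _ _ _ eF) as I2.
    pose proof (RInt_correct _ _ _ eT) as I3.
    pose proof (is_RInt_minus _ _ _ _ _ _ (is_RInt_scal _ _ _ 4 _ (is_RInt_plus _ _ _ _ _ _ I1 I2))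
                  (is_RInt_scal _ _ _ x _ I3)) as J.
    assert (J' : is_RInt (fun t => 4 * (hdens alpha U A t x + FF alpha nu K t x) - x * TG alpha nu U A K t x) 0 1
      (4 * (RInt (fun t => hdens alpha U A t x) 0 1 + RInt (fun t => FF alpha nu K t x) 0 1)
       - x * RInt (fun t => TG alpha nu U A K t x) 0 1)) by exact J.
    assert (Hge : 0 <= RInt (fun t => 4 * (hdens alpha U A t x + FF alpha nu K t x) - x * TG alpha nu U A K t x) 0 1).
    { apply RInt_ge_0; [lra | eexists; exact J' |].
      intros t Ht. unfold hdens, FF, TG.
      apply key2; [apply sqrt_lt_R0; apply Halpha; lra | lra | apply exp_pos | left; apply exp_pos]. }
    rewrite (@is_RInt_unique R_CompleteNormedModule _ _ _ _ J') in Hge.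
    unfold df, Etilde, Energy.
    change (RInt (fun t => exp (2 * beta nu alpha t x) * K ^ 2 / (4 * sqrt (alpha t x) * x ^ 4)) 0 1)
      with (RInt (fun t => FF alpha nu K t x) 0 1).
    replace (4 * x ^ 3 * (RInt (fun t => hdens alpha U A t x) 0 1 + RInt (fun t => FF alpha nu K t x) 0 1) +
      x ^ 4 * - RInt (fun t => TG alpha nu U A K t x) 0 1) with
      (x ^ 3 * (4 * (RInt (fun t => hdens alpha U A t x) 0 1 + RInt (fun t => FF alpha nu K t x) 0 1)
       - x * RInt (fun t => TG alpha nu U A K t x) 0 1)) by ring.
    apply Rmult_le_pos; [apply pow_le; lra | exact Hge]. }
  assert (Hg : g Rk <= g Ri).
  { destruct (Req_dec Rk Ri) as [E|E]; [rewrite E; lra|].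
    destruct (MVT_gen g Rk Ri df) as [c [Hc Hm]].
    - intros x Hx. rewrite Rmin_left, Rmax_right in Hx by lra. apply Dg. lra.
    - intros x Hx. rewrite Rmin_left, Rmax_right in Hx by lra.
      apply continuity_pt_filterlim. apply (@ex_derive_continuous R_AbsRing R_NormedModule g x). eexists. apply Dg. lra.
    - rewrite Rmin_left, Rmax_right in Hc by lra.
      pose proof (dfpos c ltac:(lra)). nra. }
  unfold g in Hg.
  assert (Hk4 : 0 < Rk ^ 4) by (apply pow_lt; lra).
  apply (Rmult_le_reg_l (Rk ^ 4)); [exact Hk4|].
  replace (Rk ^ 4 * (Etilde alpha nu U A K Ri * (Ri / Rk) ^ 4)) with (Ri ^ 4 * Etilde alpha nu U A K Ri)
    by (field; lra).
  exact Hg.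
Qed.
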